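(* Every tatami tiling of the $n\times n$ grid with exactly $n$ monomers has monomers in two corners of the grid, and these two corners are adjacent (i.e., they are the two endpoints of one side of the square).
   Context: A tatami tiling of the $n\times n$ grid is a tiling by monomers ($1\times1$ tiles) and dimers ($1\times2$ or $2\times1$ tiles) such that no point is a corner of four distinct tiles. *)

(* Defs.v *)
From mathcomp Require Import all_boot.
Set Implicit Arguments. Unset Strict Implicit. Unset Printing Implicit Defensive.

(* A cell of the n x n grid: (row, column), 0-indexed. *)
Definition cell (n : nat) := ('I_n * 'I_n)%type.

Definition adjacent (n : nat) (c d : cell n) : bool :=
  ((c.1 == d.1) && ((c.2.+1 == d.2 :> nat) || (d.2.+1 == c.2 :> nat))) ||
  ((c.2 == d.2) && ((c.1.+1 == d.1 :> nat) || (d.1.+1 == c.1 :> nat))).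

Definition is_monomer (n : nat) (A : {set cell n}) : bool := #|A| == 1.

Definition is_dimer (n : nat) (A : {set cell n}) : bool :=
  [exists c, exists d, adjacent c d && (A == [set c; d])].

Definition md_tiling (n : nat) (T : {set {set cell n}}) : bool :=
  partition T [set: cell n] &&
  [forall A in T, is_monomer A || is_dimer A].

(* Tatami condition: no grid point is a corner of four distinct tiles.
   Only interior grid points (i, j) with 1 <= i, j <= n-1 touch four cells;
   these are (i-1,j-1), (i-1,j), (i,j-1), (i,j).  Four distinct tiles meet
   at that point iff these four cells lie in pairwise distinct tiles. *)
Definition tatami (n : nat) (T : {set {set cell n}}) : Prop :=
  forall (a b c d : cell n),
    (a.1.+1 = c.1 :> nat) -> (a.2.+1 = b.2 :> nat) ->
    b.1 = a.1 -> c.2 = a.2 -> d.1 = c.1 -> d.2 = b.2 ->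
    ~~ uniq [:: pblock T a; pblock T b; pblock T c; pblock T d].

Definition tatami_tiling (n : nat) (T : {set {set cell n}}) : Prop :=
  md_tiling T /\ tatami T.

Definition num_monomers (n : nat) (T : {set {set cell n}}) : nat :=
  #|[set A in T | is_monomer A]|.

Definition corner (n : nat) (c : cell n) : bool :=
  ((c.1 == 0 :> nat) || (c.1 == n.-1 :> nat)) &&
  ((c.2 == 0 :> nat) || (c.2 == n.-1 :> nat)).

(* Main.v *)
Require Import Defs.
From mathcomp Require Import all_boot.
From mathcomp Require Import zify.
Set Implicit Arguments. Unset Strict Implicit. Unset Printing Implicit Defensive.


Definition Rel := nat * nat -> nat * nat -> bool.
Definition Hs (R : Rel) := forall c d, R c d -> R d c.
Definition H3 (R : Rel) := forall c d e, R c d -> R c e -> c <> d -> c <> e -> d <> e -> False.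
Definition tat (R : Rel) m := forall i j, i.+1 < m -> j.+1 < m ->
  [|| R (i,j) (i,j.+1), R (i,j) (i.+1,j), R (i,j.+1) (i.+1,j.+1) | R (i.+1,j) (i.+1,j.+1)].
Definition shR (R : Rel) a b : Rel := fun c d => R (c.1 + a, c.2 + b) (d.1 + a, d.2 + b).
Definition G (R : Rel) k l := [&& ~~ R (k,0) (k.+1,0), ~~ R (0,k) (0,k.+1),
   ~~ R (l, (k+l).+1) (l.+1, (k+l).+1) & ~~ R ((k+l).+1, l) ((k+l).+1, l.+1)].

Lemma Hs_sh R a b : Hs R -> Hs (shR R a b).
Proof. by move=> h c d; apply: h. Qed.

Lemma H3_sh R a b : H3 R -> H3 (shR R a b).
Proof.
move=> h [c1 c2] [d1 d2] [e1 e2] h1 h2 n1 n2 n3.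
apply: (h _ _ _ h1 h2) => -[] ? ?.
- by apply: n1; congr pair; lia.
- by apply: n2; congr pair; lia.
- by apply: n3; congr pair; lia.
Qed.

Lemma tat_sh R m a b m' : tat R m -> a + m' <= m -> b + m' <= m -> tat (shR R a b) m'.
Proof.
move=> h ha hb i j hi hj; rewrite /shR /= !addSn; apply: h; lia.
Qed.

Lemma tat_le R m m' : tat R m -> m' <= m -> tat R m'.
Proof. move=> h hm i j hi hj; apply: h; lia. Qed.

Ltac plia := repeat match goal with H : _ |- _ => clear H end; lia.
Ltac fixR H :=
  let h := fresh in move: H => h; first [exact h |
  match goal with |- is_true (~~ ?R (?a,?b) (?c,?d)) =>
    match type of h with is_true (~~ R (?a',?b') (?c',?d')) =>
      have -> : R (a,b) (c,d) = R (a',b') (c',d') by congr (R (_,_) (_,_)); plia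
    end end; exact h].

Lemma base R : tat R 2 -> G R 0 0 -> False.
Proof.
move=> ht /and4P [h1 h2 h3 h4].
by have := ht 0 0 erefl erefl; rewrite (negbTE h1) (negbTE h2) (negbTE h3) (negbTE h4).
Qed.

Lemma no3a R c d e : Hs R -> H3 R -> R c d -> c <> d -> c <> e -> d <> e -> ~~ R c e.
Proof. by move=> hs h3 h1 n1 n2 n3; apply/negP => h2; apply: (h3 c d e). Qed.
Lemma no3b R c d e : Hs R -> H3 R -> R c d -> c <> d -> c <> e -> d <> e -> ~~ R e c.
Proof. by move=> hs h3 h1 n1 n2 n3; apply/negP => /hs h2; apply: (h3 c d e). Qed.

Ltac neqp := let h := fresh in move=> h; case: h; plia.
Ltac rdc := first [assumption | match goal with h : Hs _ |- _ => apply: h; assumption end].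
Ltac nx d :=
  match goal with |- is_true (~~ ?R ?x ?y) =>
    first [ apply: (@no3a R x d y); [assumption|assumption| rdc | neqp | neqp | neqp]
          | apply: (@no3b R y d x); [assumption|assumption| rdc | neqp | neqp | neqp] ]
  end.


Lemma group_gen N : forall k l R, k + l <= N -> Hs R -> H3 R -> tat R (k+l).+2 -> G R k l -> False.
Proof.
elim: N => [|N IH] k l R hN hs h3 ht hG.
  have [hk hl] : k = 0 /\ l = 0 by lia.
  by subst; exact: base ht hG.
case/and4P: (hG) => hL hT hR hB.
have cT : [|| R (0,k) (1,k), R (0,k.+1) (1,k.+1) | R (1,k) (1,k.+1)].
  by have := ht 0 k ltac:(plia) ltac:(plia); rewrite (negbTE hT) /=; apply.
have cL : [|| R (k,0) (k,1), R (k,1) (k.+1,1) | R (k.+1,0) (k.+1,1)].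
  by have := ht k 0 ltac:(plia) ltac:(plia); rewrite (negbTE hL) /=; apply.
have cB : [|| R (k+l,l) (k+l,l.+1), R (k+l,l) ((k+l).+1,l) | R (k+l,l.+1) ((k+l).+1,l.+1)].
  by have := ht (k+l) l ltac:(plia) ltac:(plia); rewrite (negbTE hB) orbF; apply.
have cR : [|| R (l,k+l) (l,(k+l).+1), R (l,k+l) (l.+1,k+l) | R (l.+1,k+l) (l.+1,(k+l).+1)].
  by have := ht l (k+l) ltac:(plia) ltac:(plia); rewrite (negbTE hR) orFb; apply.
case: k hN ht hG hL hT hR hB cT cL cB cR => [|k] hN ht hG hL hT hR hB cT cL cB cR;
  case: l hN ht hG hL hT hR hB cT cL cB cR => [|l] hN ht hG hL hT hR hB cT cL cB cR.
- exact: base ht hG.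
-
  rewrite ?add0n in hR hB cB cR.
  have e3 : ~~ R (1,1) (2,1).
    by case/or3P: cL => H; [move: H; rewrite (negbTE hT) | nx (0,1) | nx (1,0)].
  have e4 : ~~ R (1,1) (1,2).
    by case/or3P: cT => H; [move: H; rewrite (negbTE hL) | nx (0,1) | nx (1,0)].
  apply: (IH 0 l (shR R 1 1)); first by clear -hN; lia.
  + exact: Hs_sh.
  + exact: H3_sh.
  + apply: tat_sh ht _ _; plia.
  + rewrite /G /shR /=; apply/and4P; split; [fixR e3|fixR e4|fixR hR|fixR hB].
-
  rewrite ?addn0 in hR hB cB cR.
  have e5 : ~~ R (1,k) (1,k.+1).
    case/or3P: cT => H; [nx (0,k.+1) | by move: H; rewrite (negbTE hR) | nx (1,k.+2)].
  have e6 : ~~ R (1,k.+1) (2,k.+1).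
    case/or3P: cR => H; [by move: H; rewrite (negbTE hT) | nx (0,k.+1) | nx (1,k.+2)].
  apply: (IH k 0 (shR R 1 0)); first by clear -hN; lia.
  + exact: Hs_sh.
  + exact: H3_sh.
  + apply: tat_sh ht _ _; plia.
  + rewrite /G /shR /=; apply/and4P; split; [fixR hL|fixR e5|fixR e6|fixR hB].
-
  have tT : (~~ R (1,k.+2) (1,k.+3) /\ ~~ R (1,k.+1) (1,k.+2)) \/
            (~~ R (1,k) (1,k.+1) /\ ~~ R (1,k.+1) (1,k.+2)) \/
            (~~ R (1,k.+2) (1,k.+3) /\ ~~ R (1,k) (1,k.+1)).
    case/or3P: cT => H; [right; left; split; nx (0,k.+1)
                        | left; split; nx (0,k.+2)
                        | right; right; split; [nx (1,k.+1) | nx (1,k.+2)]].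
  have tL : (~~ R (k.+2,1) (k.+3,1) /\ ~~ R (k.+1,1) (k.+2,1)) \/
            (~~ R (k,1) (k.+1,1) /\ ~~ R (k.+1,1) (k.+2,1)) \/
            (~~ R (k.+2,1) (k.+3,1) /\ ~~ R (k,1) (k.+1,1)).
    case/or3P: cL => H; [right; left; split; nx (k.+1,0)
                        | right; right; split; [nx (k.+1,1) | nx (k.+2,1)]
                        | left; split; nx (k.+2,0)].
  have tB : (~~ R (k.+1 + l.+1, l) (k.+1 + l.+1, l.+1) /\ ~~ R (k.+1 + l.+1, l.+1) (k.+1 + l.+1, l.+2)) \/
            (~~ R (k.+1 + l.+1, l.+2) (k.+1 + l.+1, l.+3) /\ ~~ R (k.+1 + l.+1, l.+1) (k.+1 + l.+1, l.+2)) \/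
            (~~ R (k.+1 + l.+1, l) (k.+1 + l.+1, l.+1) /\ ~~ R (k.+1 + l.+1, l.+2) (k.+1 + l.+1, l.+3)).
    case/or3P: cB => H; [right; right; split; [nx (k.+1 + l.+1, l.+2) | nx (k.+1 + l.+1, l.+1)]
                        | left; split; nx ((k.+1 + l.+1).+1, l.+1)
                        | right; left; split; nx ((k.+1 + l.+1).+1, l.+2)].
  have tR : (~~ R (l, k.+1 + l.+1) (l.+1, k.+1 + l.+1) /\ ~~ R (l.+1, k.+1 + l.+1) (l.+2, k.+1 + l.+1)) \/
            (~~ R (l.+2, k.+1 + l.+1) (l.+3, k.+1 + l.+1) /\ ~~ R (l.+1, k.+1 + l.+1) (l.+2, k.+1 + l.+1)) \/
            (~~ R (l, k.+1 + l.+1) (l.+1, k.+1 + l.+1) /\ ~~ R (l.+2, k.+1 + l.+1) (l.+3, k.+1 + l.+1)).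
    case/or3P: cR => H; [left; split; nx (l.+1, (k.+1 + l.+1).+1)
                        | right; right; split; [nx (l.+2, k.+1 + l.+1) | nx (l.+1, k.+1 + l.+1)]
                        | right; left; split; nx (l.+2, (k.+1 + l.+1).+1)].
  have : (~~ R (l, k.+1 + l.+1) (l.+1, k.+1 + l.+1) /\ ~~ R (k.+1 + l.+1, l) (k.+1 + l.+1, l.+1)) \/
         (~~ R (k.+2,1) (k.+3,1) /\ ~~ R (1,k.+2) (1,k.+3)) \/
         (~~ R (1,k) (1,k.+1) /\ ~~ R (l.+2, k.+1 + l.+1) (l.+3, k.+1 + l.+1)) \/
         (~~ R (k,1) (k.+1,1) /\ ~~ R (k.+1 + l.+1, l.+2) (k.+1 + l.+1, l.+3)) \/
         (~~ R (1,k.+1) (1,k.+2) /\ ~~ R (k.+1,1) (k.+2,1) /\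
          ~~ R (l.+1, k.+1 + l.+1) (l.+2, k.+1 + l.+1) /\ ~~ R (k.+1 + l.+1, l.+1) (k.+1 + l.+1, l.+2)).
    clear -tT tL tB tR; tauto.
  case=> [[e1 e2]|[[e3 e4]|[[e5 e6]|[[e7 e8]|[fT [fL [fR fB]]]]]]].
  + apply: (IH k.+1 l R); first by clear -hN; lia.
    * exact: hs.
    * exact: h3.
    * apply: tat_le ht _; plia.
    * apply/and4P; split; [fixR hL|fixR hT|fixR e1|fixR e2].
  + apply: (IH k.+1 l (shR R 1 1)); first by clear -hN; lia.
    * exact: Hs_sh.
    * exact: H3_sh.
    * apply: tat_sh ht _ _; plia.
    * rewrite /G /shR /=; apply/and4P; split; [fixR e3|fixR e4|fixR hR|fixR hB].
  + apply: (IH k l.+1 (shR R 1 0)); first by clear -hN; lia.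
    * exact: Hs_sh.
    * exact: H3_sh.
    * apply: tat_sh ht _ _; plia.
    * rewrite /G /shR /=; apply/and4P; split; [fixR hL|fixR e5|fixR e6|fixR hB].
  + apply: (IH k l.+1 (shR R 0 1)); first by clear -hN; lia.
    * exact: Hs_sh.
    * exact: H3_sh.
    * apply: tat_sh ht _ _; plia.
    * rewrite /G /shR /=; apply/and4P; split; [fixR e7|fixR hT|fixR hR|fixR e8].
  + apply: (IH k l (shR R 1 1)); first by clear -hN; lia.
    * exact: Hs_sh.
    * exact: H3_sh.
    * apply: tat_sh ht _ _; plia.
    * rewrite /G /shR /=; apply/and4P; split; [fixR fL|fixR fT|fixR fR|fixR fB].
Qed.


Lemma adj_sum i j bi bj :
  (i = bi /\ (j.+1 = bj \/ bj.+1 = j)) \/ (j = bj /\ (i.+1 = bi \/ bi.+1 = i)) ->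
  ((bi,bj) == (i,j.+1)) + ((bi,bj) == (i.+1,j)) + ((0 < j) && ((bi,bj) == (i,j.-1)))
  + ((0 < i) && ((bi,bj) == (i.-1,j))) = 1.
Proof.
move=> h; rewrite !xpair_eqE.
case: (ltnP 0 i) => hi; case: (ltnP 0 j) => hj /=;
do ![case: eqP => ? /=]; lia.
Qed.

Lemma four_terms (Q f : nat * nat -> bool) i j :
  (forall p, p != (i,j) -> Q p = f p) ->
  Q (i,j.+1) + Q (i.+1,j) + ((0 < j) && Q (i,j.-1)) + ((0 < i) && Q (i.-1,j)) =
  f (i,j.+1) + f (i.+1,j) + ((0 < j) && f (i,j.-1)) + ((0 < i) && f (i.-1,j)).
Proof.
move=> hQ.
have ne : forall a b c d : nat, (a != c) || (b != d) -> (a,b) != (c,d).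
  by move=> a b c d h; rewrite xpair_eqE negb_and.
rewrite hQ ?ne ?(gtn_eqF (ltnSn _)) ?orbT // hQ ?ne ?(gtn_eqF (ltnSn _)) //.
case: j hQ => [|j] hQ; case: i hQ => [|i] hQ //=;
  rewrite ?hQ // ne // ?(ltn_eqF (ltnSn _)) ?orbT //.
Qed.

Section Til.
Variable n : nat.
Variable T : {set {set cell n}}.
Hypothesis hT : md_tiling T.

Definition co (a : cell n) : nat * nat := ((a.1 : nat), (a.2 : nat)).

Lemma co_inj : injective co.
Proof. by move=> [a1 a2] [b1 b2] [] /val_inj -> /val_inj ->. Qed.

Lemma hpart : partition T [set: cell n].
Proof. by case/andP: hT. Qed.

Lemma hcover : cover T = [set: cell n].
Proof. by case/and3P: hpart => /eqP. Qed.

Lemma htriv : trivIset T.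
Proof. by case/and3P: hpart. Qed.

Lemma hblocks A : A \in T -> is_monomer A || is_dimer A.
Proof. by case/andP: hT => _ /forall_inP; apply. Qed.

Lemma mem_pb a : a \in pblock T a.
Proof. by rewrite mem_pblock hcover inE. Qed.

Lemma pb_in a : pblock T a \in T.
Proof. by apply: pblock_mem; rewrite hcover inE. Qed.

Lemma pb_eq a A : A \in T -> a \in A -> pblock T a = A.
Proof. by move=> hA ha; apply: def_pblock => //; exact: htriv. Qed.

Lemma blk2 a b : a != b -> pblock T a = pblock T b ->
  adjacent a b /\ forall e, e \in pblock T a -> e = a \/ e = b.
Proof.
move=> nab eab.
have ha := mem_pb a; have hb := mem_pb b; rewrite -eab in hb.
case/orP: (hblocks (pb_in a)).
  move=> /cards1P [x hx]; move: ha hb; rewrite hx !inE => /eqP ea /eqP eb.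
  by rewrite ea eb eqxx in nab.
case/existsP => x /existsP [y /andP [axy /eqP hxy]].
move: ha hb; rewrite hxy !inE => ha hb.
have adjS : forall u v : cell n, adjacent u v -> adjacent v u.
  by move=> u v /orP [/andP [e1 e2]|/andP [e1 e2]]; apply/orP; [left|right];
     rewrite eq_sym e1 /= orbC.
have key : forall e, e \in [set x; y] -> e = x \/ e = y.
  by move=> e; rewrite !inE => /orP [] /eqP; auto.
case/orP: ha => /eqP ea; case/orP: hb => /eqP eb.
- by rewrite ea eb eqxx in nab.
- split; first by rewrite ea eb.
  by move=> e he; have := key e he; rewrite ea eb.
- split; first by rewrite ea eb; apply: adjS.
  by move=> e he; have := key e he; rewrite ea eb; case; auto.
- by rewrite ea eb eqxx in nab.
Qed.

Definition RT : Rel := fun c d =>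
  [exists a : cell n, exists b : cell n, [&& co a == c, co b == d & pblock T a == pblock T b]].

Lemma RT_co a b : RT (co a) (co b) = (pblock T a == pblock T b).
Proof.
apply/existsP/idP => [[a' /existsP [b' /and3P [/eqP /co_inj -> /eqP /co_inj -> //]]]|h].
by exists a; apply/existsP; exists b; rewrite !eqxx.
Qed.

Lemma RT_ex c d : RT c d -> exists a b, [/\ c = co a, d = co b & pblock T a = pblock T b].
Proof.
by case/existsP => a /existsP [b /and3P [/eqP <- /eqP <- /eqP e]]; exists a, b.
Qed.

Lemma RT_sym : Hs RT.
Proof. by move=> c d /RT_ex [a [b [-> -> e]]]; rewrite RT_co e. Qed.

Lemma RT_H3 : H3 RT.
Proof.
move=> c d e /RT_ex [a [b [-> -> eab]]] /RT_ex [a' [b' [ea -> eab']]] n1 n2 n3.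
move/co_inj: ea => ea; subst a'.
have nab : a != b by apply/eqP => h; apply: n1; rewrite h.
have [_ key] := blk2 nab eab.
have := mem_pb b'; rewrite -eab' => /key [] hb'.
  by apply: n2; rewrite hb'.
by apply: n3; rewrite hb'.
Qed.

Lemma RT_tat : tatami T -> tat RT n.
Proof.
move=> ht i j hi hj.
pose oi := Ordinal (ltnW hi); pose oi1 := Ordinal hi.
pose oj := Ordinal (ltnW hj); pose oj1 := Ordinal hj.
have := ht (oi,oj) (oi,oj1) (oi1,oj) (oi1,oj1) erefl erefl erefl erefl erefl erefl => hu.
change (RT (co (oi,oj)) (co (oi,oj1)) || (RT (co (oi,oj)) (co (oi1,oj)) ||
  (RT (co (oi,oj1)) (co (oi1,oj1)) || RT (co (oi1,oj)) (co (oi1,oj1))))).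
rewrite !RT_co.
have nadj : forall u v : cell n, (u.1 : nat) != v.1 -> (u.2 : nat) != v.2 -> pblock T u != pblock T v.
  move=> u v h1 h2; apply/eqP => e.
  have nuv : u != v by apply/eqP => huv; rewrite huv eqxx in h1.
  have [+ _] := blk2 nuv e; rewrite /adjacent -!val_eqE.
  by rewrite (negbTE h1) (negbTE h2).
have d1 := nadj (oi,oj) (oi1,oj1) ltac:(rewrite /= neq_ltn ltnSn //) ltac:(rewrite /= neq_ltn ltnSn //).
have d2 := nadj (oi,oj1) (oi1,oj) ltac:(rewrite /= neq_ltn ltnSn //) ltac:(rewrite /= neq_ltn ltnSn orbT //).
move: hu; rewrite /= !inE !negb_and !negb_or !negbK (negbTE d1) (negbTE d2) /= orbF.
by rewrite !andbT negb_and !negbK; case/or3P => [/orP [->|->]|->|->]; rewrite ?orbT.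
Qed.

Definition hh i j := RT (i,j) (i,j.+1).
Definition vv i j := RT (i,j) (i.+1,j).

Lemma RT_symE c d : RT c d = RT d c.
Proof. by apply/idP/idP; apply: RT_sym. Qed.

Lemma cell_id (a : cell n) :
  ([set a] \in T) + hh a.1 a.2 + vv a.1 a.2 + ((0 < a.2) && hh a.1 (a.2).-1)
    + ((0 < a.1) && vv (a.1).-1 a.2) = 1.
Proof.
have -> : (0 < a.2) && hh a.1 (a.2).-1 = (0 < a.2) && RT (co a) (a.1 : nat, (a.2).-1).
  by rewrite /hh; case: ltnP => //= h; rewrite prednK // RT_symE.
have -> : (0 < a.1) && vv (a.1).-1 a.2 = (0 < a.1) && RT (co a) ((a.1).-1, a.2 : nat).
  by rewrite /vv; case: ltnP => //= h; rewrite prednK // RT_symE.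
rewrite /hh /vv -!addnA.
case: (pickP [pred b | (b != a) && (pblock T b == pblock T a)]) => [b /andP [nba /eqP eba]|hn].
- have nab : a != b by rewrite eq_sym.
  have [adj key] := blk2 nab (esym eba).
  have hQ : forall p, p != co a -> RT (co a) p = (co b == p).
    move=> p hp; apply/idP/eqP => [/RT_ex [a' [b' [/co_inj e1 e2 e3]]]|<-]; last by rewrite RT_co eba.
    subst a' p; have := mem_pb b'; rewrite -e3 => /key [hb'|->] //.
    by rewrite hb' eqxx in hp.
  have -> : ([set a] \in T) = false.
    apply/negP => hs; have := mem_pb b; rewrite eba (pb_eq hs (set11 a)) inE => /eqP hb.
    by rewrite hb eqxx in nba.
  have E := four_terms hQ; rewrite /co -!addnA in E; rewrite add0n E.
  rewrite !addnA; apply: adj_sum.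
  by move: adj; rewrite /adjacent -!val_eqE => /orP [] /andP [/eqP -> /orP [] /eqP ->]; auto.
- have hQ : forall p, p != co a -> RT (co a) p = false.
    move=> p hp; apply/negbTE/negP => /RT_ex [a' [b' [/co_inj e1 e2 e3]]].
    subst a' p; have := hn b'; rewrite /= -e3 eqxx andbT => /negbFE /eqP hb.
    by rewrite hb eqxx in hp.
  have -> : ([set a] \in T).
    suff <- : pblock T a = [set a] by apply: pb_in.
    apply/setP => e; rewrite inE; apply/idP/eqP => [he|->]; last exact: mem_pb.
    have := hn e; rewrite /= (pb_eq (pb_in a) he) eqxx andbT.
    by move/negbFE/eqP.
  have E := four_terms hQ; rewrite /co in E *; rewrite -!addnA in E; by rewrite E !andbF.
Qed.
End Til.


Section Cnt.
Variable m : nat.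
Variable T : {set {set cell m.+2}}.
Hypothesis hT : md_tiling T.

Local Notation hh := (hh T).
Local Notation vv := (vv T).

Lemma RT_lt c d : RT T c d -> [/\ c.1 < m.+2, c.2 < m.+2, d.1 < m.+2 & d.2 < m.+2].
Proof. by case/RT_ex => a [b [-> -> _]]; rewrite /co /= !ltn_ord. Qed.

Lemma hh_last i : hh i m.+2 = false.
Proof. apply/negbTE/negP => /RT_lt [] /= *; lia. Qed.
Lemma vv_last j : vv m.+2 j = false.
Proof. apply/negbTE/negP => /RT_lt [] /= *; lia. Qed.
Lemma hh_last' i : hh i m.+1 = false.
Proof. apply/negbTE/negP => /RT_lt [] /= *; lia. Qed.
Lemma vv_last' j : vv m.+1 j = false.
Proof. apply/negbTE/negP => /RT_lt [] /= *; lia. Qed.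

Definition HH := \sum_(i < m.+2) \sum_(j < m.+2) hh i j.
Definition VV := \sum_(i < m.+2) \sum_(j < m.+2) vv i j.
Definition MC := #|[set a : cell m.+2 | [set a] \in T]|.

Lemma cells_count : m.+2 * m.+2 = MC + 2 * HH + 2 * VV.
Proof.
have <- : \sum_(a : cell m.+2) 1 = m.+2 * m.+2 by rewrite sum1_card card_prod card_ord.
rewrite -(eq_bigr _ (fun a _ => cell_id hT a)).
rewrite !big_split /=.
have hM : \sum_(a : cell m.+2) ([set a] \in T) = MC.
  rewrite /MC -sum1_card [RHS]big_mkcond /=; apply: eq_bigr => a _; rewrite inE; by case: ([set a] \in T).
have e1 : \sum_(a : cell m.+2) hh a.1 a.2 = HH by rewrite /HH pair_bigA.
have e2 : \sum_(a : cell m.+2) vv a.1 a.2 = VV by rewrite /VV pair_bigA.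
have e3 : \sum_(a : cell m.+2) ((0 < a.2) && hh a.1 (a.2).-1) = HH.
  transitivity (\sum_(i < m.+2) \sum_(j < m.+2) ((0 < (j:nat)) && hh i (j:nat).-1)).
    by rewrite pair_bigA.
  rewrite /HH.
  apply: eq_bigr => i _; rewrite big_ord_recl /= add0n [RHS]big_ord_recr /= hh_last' addn0.
  by apply: eq_bigr.
have e4 : \sum_(a : cell m.+2) ((0 < a.1) && vv (a.1).-1 a.2) = VV.
  transitivity (\sum_(i < m.+2) \sum_(j < m.+2) ((0 < (i:nat)) && vv (i:nat).-1 j)).
    by rewrite pair_bigA.
  rewrite /VV big_ord_recl /= big1 ?add0n; last by [].
  rewrite [RHS]big_ord_recr /= [X in _ + X]big1 ?addn0; last by move=> j _; rewrite vv_last'.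
  by apply: eq_bigr.
rewrite hM e1 e2 e3 e4; lia.
Qed.

Definition Hrow i := \sum_(j < m.+2) hh i j.
Definition Vcol j := \sum_(i < m.+2) vv i j.

Lemma b4 (a b c d : bool) : [|| a, b, c | d] -> 1 <= a + b + c + d.
Proof. by case: a; case: b; case: c; case: d. Qed.

Lemma Hrow_trunc i : \sum_(j < m.+1) hh i j = Hrow i.
Proof. by rewrite /Hrow [RHS]big_ord_recr /= hh_last' addn0. Qed.
Lemma Vcol_trunc j : \sum_(i < m.+1) vv i j = Vcol j.
Proof. by rewrite /Vcol [RHS]big_ord_recr /= vv_last' addn0. Qed.

Lemma cover_count : tat (RT T) m.+2 ->
  m.+1 * m.+1 + Hrow 0 + Hrow m.+1 + Vcol 0 + Vcol m.+1 <= 2 * HH + 2 * VV.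
Proof.
move=> ht.
have h1 : m.+1 * m.+1 <=
   \sum_(i < m.+1) \sum_(j < m.+1) (hh i j + vv i j + vv i j.+1 + hh i.+1 j).
  have -> : m.+1 * m.+1 = \sum_(i < m.+1) \sum_(j < m.+1) 1.
    by rewrite big_const_ord iter_addn_0 big_const_ord iter_addn_0 mul1n.
  apply: leq_sum => i _; apply: leq_sum => j _; apply: b4; apply: ht.
    by rewrite ltnS ltn_ord.
  by rewrite ltnS ltn_ord.
have eH1 : \sum_(i < m.+1) \sum_(j < m.+1) hh i j = \sum_(i < m.+1) Hrow i.
  by apply: eq_bigr => i _; rewrite Hrow_trunc.
have eH2 : \sum_(i < m.+1) \sum_(j < m.+1) hh i.+1 j = \sum_(i < m.+1) Hrow i.+1.
  by apply: eq_bigr => i _; rewrite Hrow_trunc.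
have eV1 : \sum_(i < m.+1) \sum_(j < m.+1) vv i j = \sum_(j < m.+1) Vcol j.
  by rewrite exchange_big; apply: eq_bigr => j _; rewrite Vcol_trunc.
have eV2 : \sum_(i < m.+1) \sum_(j < m.+1) vv i j.+1 = \sum_(j < m.+1) Vcol j.+1.
  by rewrite exchange_big; apply: eq_bigr => j _; rewrite Vcol_trunc.
have HHa : HH = \sum_(i < m.+1) Hrow i + Hrow m.+1 by rewrite /HH big_ord_recr.
have HHb : HH = Hrow 0 + \sum_(i < m.+1) Hrow i.+1 by rewrite /HH big_ord_recl.
have VVe : VV = \sum_(j < m.+2) Vcol j by rewrite /VV exchange_big.
have VVa : VV = \sum_(j < m.+1) Vcol j + Vcol m.+1 by rewrite VVe big_ord_recr.
have VVb : VV = Vcol 0 + \sum_(j < m.+1) Vcol j.+1 by rewrite VVe big_ord_recl.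
move: h1; under eq_bigr => i _ do rewrite !big_split /=.
rewrite !big_split /= eH1 eH2 eV1 eV2.
lia.
Qed.
End Cnt.


Lemma sum_ge1 N (g : nat -> nat) : (forall k : 'I_N.+1, 1 <= g k) ->
  \sum_(k < N.+1) g k <= N.+1 -> forall k0 : 'I_N.+1, g k0 <= 1.
Proof.
move=> h1 hs k0; move: hs; rewrite (bigD1 k0) //=.
set S := \sum_(i < N.+1 | _) g i.
have : N <= S.
  have : \sum_(k < N.+1 | k != k0) 1 <= S by apply: leq_sum => k _; exact: h1.
  by rewrite sum1_card cardC1 card_ord.
lia.
Qed.

Lemma nummono m (T : {set {set cell m.+2}}) : num_monomers T = MC T.
Proof.
rewrite /num_monomers /MC.
have -> : [set A in T | is_monomer A] = (fun a => [set a]) @: [set a : cell m.+2 | [set a] \in T].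
  apply/setP => A; rewrite !inE /is_monomer; apply/andP/imsetP => [[hA /cards1P [x hx]]|[x]].
    by exists x; rewrite // inE -hx.
  by rewrite inE => hx ->; rewrite cards1.
by rewrite card_imset //; exact: set1_inj.
Qed.

Theorem corollary2 (n : nat) (hn : 2 <= n) (T : {set {set cell n}}) :
  tatami_tiling T -> num_monomers T = n ->
  exists c1 c2 : cell n,
    [/\ corner c1, corner c2, c1 != c2,
        (c1.1 == c2.1) || (c1.2 == c2.2)
      & ([set c1] \in T) && ([set c2] \in T)].
Proof.
case: n hn T => [|[|m]] // _ T [hmd htat] hnum.
have ht := RT_tat hmd htat.
have hs := @RT_sym _ T.
have h3 := RT_H3 hmd.
have hM : MC T = m.+2 by rewrite -nummono.
have cc := cells_count hmd.
have cv := cover_count hmd ht.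
have hB : Hrow T 0 + Hrow T m.+1 + Vcol T 0 + Vcol T m.+1 <= m.+1.
  move: cc cv; rewrite hM; clear; nia.
pose g k := vv T k 0 + hh T 0 k + vv T (m - k) m.+1 + hh T m.+1 (m - k).
have hsum : \sum_(k < m.+1) g k = Hrow T 0 + Hrow T m.+1 + Vcol T 0 + Vcol T m.+1.
  rewrite /g !big_split /= -!(Hrow_trunc hmd) -!(Vcol_trunc hmd).
  have r1 : \sum_(k < m.+1) vv T (m - k) m.+1 = \sum_(k < m.+1) vv T k m.+1.
    by rewrite [RHS](reindex_inj rev_ord_inj) /=; apply: eq_bigr => k _; rewrite subSS.
  have r2 : \sum_(k < m.+1) hh T m.+1 (m - k) = \sum_(k < m.+1) hh T m.+1 k.
    by rewrite [RHS](reindex_inj rev_ord_inj) /=; apply: eq_bigr => k _; rewrite subSS.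
  rewrite r1 r2; set a1 := \sum_(i < m.+1) vv T i 0; set a2 := \sum_(i < m.+1) hh T 0 i; set a3 := \sum_(i < m.+1) vv T i m.+1; set a4 := \sum_(i < m.+1) hh T m.+1 i; clear; lia.
have hg : forall k : 'I_m.+1, 1 <= g k.
  move=> k; rewrite leqNgt; apply/negP => hk.
  have hk' : g k = 0 by move: hk; clear; lia.
  have hkm : k + (m - k) = m by have := ltn_ord k; clear; lia.
  apply: (@group_gen m k (m - k) (RT T)) => //; first by rewrite hkm.
    by rewrite hkm.
  move: hk'; rewrite /g /G /vv /hh hkm => h.
  by apply/and4P; split; apply/negP => e; move: h; rewrite e /=; clear; lia.
have g0 := sum_ge1 hg (leq_trans (eq_leq hsum) hB) ord0.
have gm := sum_ge1 hg (leq_trans (eq_leq hsum) hB) ord_max.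
rewrite /g /= subn0 subnn in g0 gm.
have c00 := cell_id hmd (ord0, ord0).
have cMM := cell_id hmd (ord_max, ord_max).
have c0M := cell_id hmd (ord0, ord_max).
have cM0 := cell_id hmd (ord_max, ord0).
rewrite /= !(hh_last' hmd) !(vv_last' hmd) in c00 cMM c0M cM0.
have k1 : ([set (ord0, ord0)] \in T) || ([set (ord_max, ord_max)] \in T).
  move: c00 cMM g0; clear; case: ([set _] \in T); case: ([set _] \in T) => //=; lia.
have k2 : ([set (ord0, ord_max)] \in T) || ([set (ord_max, ord0)] \in T).
  move: c0M cM0 gm; clear; case: ([set _] \in T); case: ([set _] \in T) => //=; lia.
have cor0 : forall a b : 'I_m.+2, (a == 0 :> nat) || (a == m.+1 :> nat) ->
   (b == 0 :> nat) || (b == m.+1 :> nat) -> corner (a, b) by move=> a b ha hb; rewrite /corner /= ha hb.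
have z0 : ((ord0 : 'I_m.+2) == 0 :> nat) || ((ord0 : 'I_m.+2) == m.+1 :> nat) by [].
have zM : ((ord_max : 'I_m.+2) == 0 :> nat) || ((ord_max : 'I_m.+2) == m.+1 :> nat) by rewrite /= eqxx.
have n0M : ((ord0 : 'I_m.+2) == ord_max) = false by rewrite -val_eqE.
have nM0 : ((ord_max : 'I_m.+2) == ord0) = false by rewrite -val_eqE.
case/orP: k1 => k1; case/orP: k2 => k2.
- exists (ord0, ord0), (ord0, ord_max); split; rewrite ?cor0 ?k1 ?k2 ?xpair_eqE ?n0M ?nM0 ?eqxx ?orbT ?andbF //.
- exists (ord0, ord0), (ord_max, ord0); split; rewrite ?cor0 ?k1 ?k2 ?xpair_eqE ?n0M ?nM0 ?eqxx ?orbT ?andbF //.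
- exists (ord_max, ord_max), (ord0, ord_max); split; rewrite ?cor0 ?k1 ?k2 ?xpair_eqE ?n0M ?nM0 ?eqxx ?orbT ?andbF //.
- exists (ord_max, ord_max), (ord_max, ord0); split; rewrite ?cor0 ?k1 ?k2 ?xpair_eqE ?n0M ?nM0 ?eqxx ?orbT ?andbF //.

Qed.
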